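(* Suppose there is $K>0$ such that $\|\nabla_{(\theta,x)}\ell(\theta,x)-\nabla_{(\theta,x)}\ell(\theta',x')\|\le K\|(\theta,x)-(\theta',x')\|$ for all $(\theta,x),(\theta',x')\in\mathbb{R}^{d_\theta}\times\mathbb{R}^{d_x}$. Then there is a constant $K_{\mathcal{F}}>0$ such that $$\|\nabla_\theta\mathcal{F}(\theta,q)-\nabla_\theta\mathcal{F}(\theta',q')\|\le K_{\mathcal{F}}\big(\|\theta-\theta'\|+\mathsf{W}_1(q,q')\big)$$ for all $\theta,\theta'\in\mathbb{R}^{d_\theta}$ and $q,q'\in\mathcal{P}(\mathbb{R}^{2d_x})$.
   Context: $\ell(\theta,x)=\log p_\theta(y,x)$ for a latent variable model $p_\theta(y,x)$ with fixed data $y$. $\mathcal{P}(\mathbb{R}^{2d_x})$: probability measures on $\mathbb{R}^{d_x}\times\mathbb{R}^{d_x}$ with Lebesgue density and finite second moment; $\mathsf{W}_1$ is the Wasserstein-1 distance. Here $\nabla_\theta\mathcal{F}(\theta,q):=-\int\nabla_\theta\ell(\theta,x)\,q(\mathrm{d}x,\mathrm{d}u)$ is the $\theta$-gradient of the momentum-enriched free energy $\mathcal{F}(\theta,m,q)=\int\log\frac{q(x,u)}{p_\theta(y,x)r_{\eta_x}(u)}q(x,u)\mathrm{d}x\mathrm{d}u+\frac{\eta_\theta}{2}\|m\|^2$ (with $r_{\eta_x}=\mathcal{N}(0,\eta_x^{-1}I)$), which does not depend on $m$. *)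

(* Defs.v *)
From HB Require Import structures.
From mathcomp Require Import all_boot all_order all_algebra.
From mathcomp Require Import all_classical all_reals all_analysis.
Set Implicit Arguments. Unset Strict Implicit. Unset Printing Implicit Defensive.
Import Order.TTheory GRing.Theory Num.Theory.
Import numFieldNormedType.Exports.
Local Open Scope classical_set_scope.
Local Open Scope ring_scope.

Definition enorm {R : realType} {n : nat} (v : 'rV[R]_n) : R :=
  Num.sqrt (\sum_(i < n) v 0 i ^+ 2).

Definition Rn (R : realType) (n : nat) := g_sigma_algebraType (@open 'rV[R]_n).

Definition box {R : realType} {m : nat} (a b : 'rV[R]_m) : set 'rV[R]_m :=
  [set x | forall i, a 0 i <= x 0 i <= b 0 i].
Definition box_vol {R : realType} {m : nat} (a b : 'rV[R]_m) : R :=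
  \prod_(i < m) (b 0 i - a 0 i).
Definition lebesgue_null {R : realType} {m : nat} (A : set 'rV[R]_m) : Prop :=
  forall eps : R, 0 < eps -> exists a b : nat -> 'rV[R]_m,
    (forall k i, a k 0 i <= b k 0 i) /\
    A `<=` \bigcup_k box (a k) (b k) /\
    (\sum_(0 <= k <oo) (box_vol (a k) (b k))%:E < eps%:E)%E.

(* Probability measures on R^dx x R^dx (identified with R^(2dx) via row_mx)
   with a Lebesgue density (= absolutely continuous w.r.t. Lebesgue measure)
   and finite second moment: the class P(R^(2 dx)). *)
Definition has_lebesgue_density {R : realType} {dx : nat}
    (q : probability (Rn R dx * Rn R dx)%type R) : Prop :=
  forall A : set (Rn R dx * Rn R dx)%type, measurable A ->
    lebesgue_null [set row_mx p.1 p.2 | p in A] -> q A = 0%E.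

Definition finite_second_moment {R : realType} {dx : nat}
    (q : probability (Rn R dx * Rn R dx)%type R) : Prop :=
  (\int[q]_p ((enorm (p.1 : 'rV[R]_dx)) ^+ 2 + (enorm (p.2 : 'rV[R]_dx)) ^+ 2)%:E
     < +oo)%E.

Definition in_P2 {R : realType} {dx : nat}
    (q : probability (Rn R dx * Rn R dx)%type R) : Prop :=
  has_lebesgue_density q /\ finite_second_moment q.

Definition is_coupling {R : realType} {dx : nat}
    (q q' : probability (Rn R dx * Rn R dx)%type R)
    (g : probability ((Rn R dx * Rn R dx) * (Rn R dx * Rn R dx))%type R) : Prop :=
  forall A : set (Rn R dx * Rn R dx)%type, measurable A ->
    g (fst @^-1` A) = q A /\ g (snd @^-1` A) = q' A.

Definition W1 {R : realType} {dx : nat}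
    (q q' : probability (Rn R dx * Rn R dx)%type R) : \bar R :=
  ereal_inf [set (\int[g]_z
      (enorm (row_mx ((z.1.1 : 'rV[R]_dx) - z.2.1) ((z.1.2 : 'rV[R]_dx) - z.2.2)))%:E)%E
    | g in is_coupling q q'].

Definition grad_theta {R : realType} {dt dx : nat}
    (l : 'rV[R]_dt -> 'rV[R]_dx -> R) (th : 'rV[R]_dt) (x : 'rV[R]_dx) : 'rV[R]_dt :=
  \row_i ('D_(delta_mx 0 i) (fun t => l t x) th).
Definition grad_x {R : realType} {dt dx : nat}
    (l : 'rV[R]_dt -> 'rV[R]_dx -> R) (th : 'rV[R]_dt) (x : 'rV[R]_dx) : 'rV[R]_dx :=
  \row_i ('D_(delta_mx 0 i) (fun y => l th y) x).
Definition grad_full {R : realType} {dt dx : nat}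
    (l : 'rV[R]_dt -> 'rV[R]_dx -> R) (th : 'rV[R]_dt) (x : 'rV[R]_dx) : 'rV[R]_(dt + dx) :=
  row_mx (grad_theta l th x) (grad_x l th x).

Definition grad_theta_F {R : realType} {dt dx : nat}
    (l : 'rV[R]_dt -> 'rV[R]_dx -> R) (th : 'rV[R]_dt)
    (q : probability (Rn R dx * Rn R dx)%type R) : 'rV[R]_dt :=
  \row_i (- Rintegral q setT (fun p : (Rn R dx * Rn R dx)%type =>
                                 grad_theta l th (p.1 : 'rV[R]_dx) 0 i)).

(* Main.v *)
Require Import Defs.
From HB Require Import structures.
From mathcomp Require Import all_boot all_order all_algebra.
From mathcomp Require Import all_classical all_reals all_analysis.
From mathcomp Require Import ring lra measurable_realfun.
Import Order.TTheory GRing.Theory Num.Theory.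
Import numFieldNormedType.Exports.
Local Open Scope classical_set_scope.
Local Open Scope ring_scope.

Set Implicit Arguments.
Section H.
Context {R : realType}.

Lemma enorm_ge0 n (v : 'rV[R]_n) : 0 <= enorm v.
Proof. exact: sqrtr_ge0. Qed.

Lemma enorm_sq n (v : 'rV[R]_n) : enorm v ^+ 2 = \sum_i v 0 i ^+ 2.
Proof. by rewrite sqr_sqrtr // sumr_ge0 // => i _; exact: sqr_ge0. Qed.

Lemma sq_le_nonneg (a b : R) : 0 <= a -> 0 <= b -> a ^+ 2 <= b ^+ 2 -> a <= b.
Proof. move=> a0 b0 h; nra. Qed.

Lemma enorm_coord n (v : 'rV[R]_n) j : `|v 0 j| <= enorm v.
Proof.
apply: sq_le_nonneg => //; first exact: enorm_ge0.
rewrite enorm_sq real_normK ?num_real // (bigD1 j) //= lerDl.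
by rewrite sumr_ge0 // => i _; exact: sqr_ge0.
Qed.

Lemma enorm_row_mx_sq m n (a : 'rV[R]_m) (b : 'rV[R]_n) :
  enorm (row_mx a b) ^+ 2 = enorm a ^+ 2 + enorm b ^+ 2.
Proof.
rewrite !enorm_sq big_split_ord /=.
by congr (_ + _); apply: eq_bigr => i _; rewrite ?row_mxEl ?row_mxEr.
Qed.

Lemma enorm_row_mx_le m n (a : 'rV[R]_m) (b : 'rV[R]_n) :
  enorm (row_mx a b) <= enorm a + enorm b.
Proof.
apply: sq_le_nonneg; rewrite ?addr_ge0 ?enorm_ge0 //.
rewrite enorm_row_mx_sq; have := enorm_ge0 a; have := enorm_ge0 b; nra.
Qed.

Lemma enorm_row_mx_gel m n (a : 'rV[R]_m) (b : 'rV[R]_n) :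
  enorm a <= enorm (row_mx a b).
Proof.
apply: sq_le_nonneg; rewrite ?enorm_ge0 //.
rewrite enorm_row_mx_sq; have := enorm_ge0 b; nra.
Qed.

Lemma sum_sq_le n (c : 'I_n -> R) : (forall i, 0 <= c i) ->
  \sum_i c i ^+ 2 <= (\sum_i c i) ^+ 2.
Proof.
elim: n c => [|n IH] c c0; first by rewrite !big_ord0 expr0n.
rewrite !big_ord_recr /=.
have h := IH (fun i => c (widen_ord (leqnSn n) i)) (fun i => c0 _).
have hs : 0 <= \sum_(i < n) c (widen_ord (leqnSn n) i) by rewrite sumr_ge0.
have := c0 ord_max. nra.
Qed.

Lemma enorm_le_sum n (v : 'rV[R]_n) : enorm v <= \sum_i `|v 0 i|.
Proof.
apply: sq_le_nonneg; rewrite ?enorm_ge0 ?sumr_ge0 //.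
rewrite enorm_sq (eq_bigr (fun i => `|v 0 i| ^+ 2)); last first.
  by move=> i _; rewrite real_normK ?num_real.
exact: sum_sq_le.
Qed.

Lemma enorm0 n : enorm (0 : 'rV[R]_n) = 0.
Proof.
rewrite /enorm big1 ?sqrtr0 // => i _; by rewrite mxE expr0n.
Qed.

Lemma coord_le_mxnorm n (v : 'rV[R]_n) j : `|v 0 j| <= `|v|.
Proof.
have /mapP[k Hk ->] : `|v 0 j| \in [seq `|v x.1 x.2| | x : 'I_1 * 'I_n].
  by apply/mapP; exists (0, j) => //=; rewrite mem_enum.
by rewrite [leRHS]/Num.norm /= mx_normrE; apply/bigmax_geP; right => /=; exists k.
Qed.

Lemma enorm_le_mxnorm n (v : 'rV[R]_n) : enorm v <= n%:R * `|v|.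
Proof.
apply: le_trans (enorm_le_sum v) _.
have -> : n%:R * `|v| = \sum_(i < n) `|v| by rewrite sumr_const card_ord mulr_natl.
by apply: ler_sum => i _; exact: coord_le_mxnorm.
Qed.

Lemma lip_continuous n (f : 'rV[R]_n -> R) (C : R) :
  (forall x y, `|f x - f y| <= C * `|x - y|) -> continuous f.
Proof.
move=> hf x.
have C1 : 0 < `|C| + 1 by rewrite ltr_wpDl.
apply/(@cvgrPdist_lt _ _ _ (nbhs x)) => e e0.
near=> y.
apply: (le_lt_trans (hf x y)).
apply: (@le_lt_trans _ _ ((`|C| + 1) * `|x - y|)).
  apply: ler_wpM2r; first by [].
  by rewrite (le_trans (ler_norm C)) // lerDl.
rewrite -ltr_pdivlMl //.
near: y.
apply: cvgr_dist_lt => //.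
by rewrite mulr_gt0 ?invr_gt0.
Unshelve. all: by end_near. Qed.

Lemma cont_meas n (f : 'rV[R]_n -> R) :
  continuous f -> measurable_fun setT (f : Rn R n -> R).
Proof.
move=> /continuousP cf.
apply: (measurability _ (RGenOpens.measurableE R)).
move=> _ [_ [a [b ->] <-]].
rewrite setTI.
apply: sub_sigma_algebra.
apply: cf.
exact: interval_open.
Qed.

Lemma coord_meas n (j : 'I_n) : measurable_fun setT (fun v : Rn R n => (v : 'rV[R]_n) 0 j).
Proof.
apply: cont_meas; apply: (@lip_continuous _ _ 1) => x y.
by rewrite mul1r; have := coord_le_mxnorm (x - y) j; rewrite !mxE.
Qed.

End H.

Section Core.
Local Open Scope ereal_scope.
Context d (X : measurableType d) (R : realType) (q : probability X R)
  (g : probability (X * X)%type R) (phi : X * X -> X) (mphi : measurable_fun setT phi)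
  (hq : forall A, measurable A -> g (phi @^-1` A) = q A).

Lemma push_int (f : X -> \bar R) :
  \int[q]_x f x = \int[pushforward g phi]_x f x.
Proof.
pose pg := measure_function_pushforward__canonical__measure_function_Measure g mphi.
apply: (eq_measure_integral pg) => A mA _.
by rewrite /= /pushforward hq.
Qed.

Variables (F : X -> R) (mF : measurable_fun setT F)
  (iF : q.-integrable setT (EFin \o F)).

Lemma transfer_integrable : g.-integrable setT (EFin \o (F \o phi)).
Proof.
apply/integrableP; split.
  by apply/measurable_EFinP; exact: measurableT_comp.
move/integrableP: iF => [_]; apply: le_lt_trans.
rewrite push_int ge0_integral_pushforward //.
by apply: measurableT_comp => //; exact/measurable_EFinP.
Qed.

Lemma transfer_integral : \int[q]_x (F x)%:E = \int[g]_z (F (phi z))%:E.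
Proof.
rewrite push_int (integral_pushforward mphi) //.
- exact/measurable_EFinP.
- by rewrite preimage_setT; exact: transfer_integrable.
Qed.

End Core.

Lemma Rint_EFin d (X : measurableType d) (R : realType) (mu : {measure set X -> \bar R}) (F : X -> R) :
  mu.-integrable setT (EFin \o F) -> (Rintegral mu setT F)%:E = (\int[mu]_x (F x)%:E)%E.
Proof. by move=> iF; rewrite /Rintegral fineK // integrable_fin_num. Qed.

Lemma core d (X : measurableType d) (R : realType) (q q' : probability X R)
  (g : probability (X * X)%type R)
  (hq : forall A, measurable A -> g (fst @^-1` A) = q A)
  (hq' : forall A, measurable A -> g (snd @^-1` A) = q' A)
  (F1 F2 : X -> R) (mF1 : measurable_fun setT F1) (mF2 : measurable_fun setT F2)
  (iF1 : q.-integrable setT (EFin \o F1)) (iF2 : q'.-integrable setT (EFin \o F2))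
  (G : (X * X)%type -> R) (mG : measurable_fun setT G)
  (hG : forall z, `|F1 z.1 - F2 z.2| <= G z) :
  ((`|Rintegral q setT F1 - Rintegral q' setT F2|)%:E <= \int[g]_z (G z)%:E)%E.
Proof.
have i1 := @transfer_integrable _ _ _ q g fst measurable_fst hq F1 mF1 iF1.
have i2 := @transfer_integrable _ _ _ q' g snd measurable_snd hq' F2 mF2 iF2.
rewrite -abse_EFin EFinB !Rint_EFin //.
rewrite (@transfer_integral _ _ _ q g fst measurable_fst hq F1 mF1 iF1).
rewrite (@transfer_integral _ _ _ q' g snd measurable_snd hq' F2 mF2 iF2).
rewrite -integralB_EFin //.
have mh : measurable_fun setT (fun z : X * X => (F1 z.1)%:E - (F2 z.2)%:E)%E.
  apply/measurable_EFinP => /=.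
  apply: measurable_funB.
  exact: measurableT_comp mF1 measurable_fst.
  exact: measurableT_comp mF2 measurable_snd.
apply: le_trans (le_abse_integral _ _ mh) _ => //.
apply: ge0_le_integral => //.
- by apply: measurableT_comp.
- by apply/measurable_EFinP.
- by move=> z _; rewrite -EFinB abse_EFin lee_fin.
Qed.

Lemma int_aff d (Y : measurableType d) (R : realType) (g : probability Y R) (a k : R) (h : Y -> R) :
  0 <= a -> 0 <= k -> measurable_fun setT h -> (forall y, 0 <= h y) ->
  (\int[g]_y ((a + k * h y)%:E) = a%:E + k%:E * \int[g]_y (h y)%:E)%E.
Proof.
move=> a0 k0 mh h0.
rewrite (eq_integral (fun y => (a%:E + k%:E * (h y)%:E)%E)); last first.
  by move=> z _; rewrite EFinD EFinM.
have mEh : measurable_fun setT (fun y => (h y)%:E) by apply/measurable_EFinP.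
rewrite ge0_integralD //.
- rewrite integral_cst // [X in (_ * X)%E](_ : _ = 1%E); last exact: probability_setT.
  by rewrite mule1 ge0_integralZl_EFin // => z _; rewrite lee_fin.
- by move=> z _; rewrite -EFinM lee_fin mulr_ge0.
- apply/measurable_EFinP => /=.
  apply: measurable_funM; first exact: measurable_cst.
  exact: mh.
Qed.

Unset Implicit Arguments.


Section Main.
Variables (R : realType) (dt dx : nat) (l : 'rV[R]_dt -> 'rV[R]_dx -> R) (K : R)
  (K_pos : 0 < K)
  (l_lip : forall (th th' : 'rV[R]_dt) (x x' : 'rV[R]_dx),
        enorm (grad_full l th x - grad_full l th' x')
          <= K * enorm (row_mx (th - th') (x - x'))).

Let X := (Rn R dx * Rn R dx)%type.

Lemma lipf th th' x x' i :
  `|grad_theta l th x 0 i - grad_theta l th' x' 0 i| <= K * (enorm (th - th') + enorm (x - x')).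
Proof.
have h := l_lip th th' x x'.
have e : (grad_full l th x - grad_full l th' x') 0 (lshift dx i) =
    grad_theta l th x 0 i - grad_theta l th' x' 0 i.
  by rewrite /grad_full opp_row_mx add_row_mx row_mxEl !mxE.
rewrite -e.
apply: le_trans; first exact: enorm_coord.
apply: le_trans; first exact: h.
by apply: ler_wpM2l; [exact: ltW | exact: enorm_row_mx_le].
Qed.

Lemma f_meas th i : measurable_fun setT (fun x : Rn R dx => grad_theta l th x 0 i).
Proof.
apply: cont_meas; apply: (@lip_continuous _ _ _ (K * dx%:R)) => x y.
apply: le_trans (lipf th th x y i) _.
rewrite subrr enorm0 add0r -mulrA; apply: ler_wpM2l; first exact: ltW.
exact: enorm_le_mxnorm.
Qed.

Definition F th i := fun p : X => grad_theta l th (p.1 : 'rV[R]_dx) 0 i.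

Lemma F_meas th i : measurable_fun setT (F th i).
Proof. exact: measurableT_comp (f_meas th i) measurable_fst. Qed.

Lemma enorm_sq_meas : measurable_fun setT (fun v : Rn R dx => enorm (v : 'rV[R]_dx) ^+ 2).
Proof.
rewrite (_ : (fun v : Rn R dx => _) = (fun v : Rn R dx => \sum_(i < dx) ((v : 'rV[R]_dx) 0 i) ^+ 2)); last first.
  by apply/funext => v; rewrite enorm_sq.
apply: measurable_sum => i.
exact: measurable_funX (coord_meas _).
Qed.

Definition M := fun p : X => enorm (p.1 : 'rV[R]_dx) ^+ 2 + enorm (p.2 : 'rV[R]_dx) ^+ 2.

Lemma M_meas : measurable_fun setT M.
Proof.
apply: measurable_funD.
  exact: measurableT_comp enorm_sq_meas measurable_fst.
exact: measurableT_comp enorm_sq_meas measurable_snd.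
Qed.

Lemma F_int th i (q : probability X R) : in_P2 q -> q.-integrable setT (EFin \o F th i).
Proof.
move=> [_ hM].
have M0 p : 0 <= M p by rewrite addr_ge0 // sqr_ge0.
have iM : q.-integrable setT (EFin \o M).
  apply/integrableP; split; first by apply/measurable_EFinP; exact: M_meas.
  rewrite (eq_integral (fun p => (M p)%:E)) //.
  by move=> p _ /=; rewrite ger0_norm.
have i1 : q.-integrable setT (EFin \o cst (1:R)) by exact: finite_measure_integrable_cst.
set c := `|grad_theta l th 0 0 i| + K.
have c0 : 0 <= c by rewrite addr_ge0 // ltW.
have ic : q.-integrable setT (fun p => (c * (1 + M p))%:E).
  apply: (eq_integrable measurableT _ _ _ (integrableZl measurableT c (integrableD measurableT i1 iM))) => p _.
  by rewrite /= EFinM EFinD.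
apply: (le_integrable measurableT _ _ ic).
  by apply/measurable_EFinP; exact: F_meas.
move=> p _ /=; rewrite lee_fin.
have h := lipf th th (p.1 : 'rV[R]_dx) 0 i.
rewrite subrr enorm0 add0r subr0 in h.
have e1 : enorm (p.1 : 'rV[R]_dx) <= 1 + M p.
  rewrite /M; have := enorm_ge0 (p.1 : 'rV[R]_dx); have := sqr_ge0 (enorm (p.2 : 'rV[R]_dx)); nra.
rewrite [X in _ <= X]ger0_norm ?mulr_ge0 ?addr_ge0 //.
have hF : `|F th i p| <= `|grad_theta l th 0 0 i| + K * enorm (p.1 : 'rV[R]_dx).
  have := ler_normD (F th i p - grad_theta l th 0 0 i) (grad_theta l th 0 0 i).
  rewrite subrK /F => hh; apply: le_trans hh _; by rewrite [leLHS]addrC lerD2l.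
have h1 : 0 <= `|grad_theta l th 0 0 i| * M p by rewrite mulr_ge0.
have h2 : K * enorm (p.1 : 'rV[R]_dx) <= K * (1 + M p) by rewrite ler_wpM2l // ltW.
rewrite /c (_ : _ * (1 + M p) = `|grad_theta l th 0 0 i| + `|grad_theta l th 0 0 i| * M p + K * (1 + M p)); last by ring.
lra.
- exact: ltW.
- exact: sqr_ge0.
- exact: sqr_ge0.
Qed.


Definition E (z : (X * X)%type) : R :=
  enorm (row_mx ((z.1.1 : 'rV[R]_dx) - z.2.1) ((z.1.2 : 'rV[R]_dx) - z.2.2)).

Lemma E_ge0 z : 0 <= E z.
Proof. exact: enorm_ge0. Qed.

Lemma coordY (a b : bool) (j : 'I_dx) :
  measurable_fun setT (fun z : (X * X)%type =>
     ((if a then (if b then z.1.1 else z.1.2) else (if b then z.2.1 else z.2.2)) : 'rV[R]_dx) 0 j).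
Proof.
case: a; case: b.
- exact: measurableT_comp (coord_meas j) (measurableT_comp measurable_fst measurable_fst).
- exact: measurableT_comp (coord_meas j) (measurableT_comp measurable_snd measurable_fst).
- exact: measurableT_comp (coord_meas j) (measurableT_comp measurable_fst measurable_snd).
- exact: measurableT_comp (coord_meas j) (measurableT_comp measurable_snd measurable_snd).
Qed.

Lemma E_meas : measurable_fun setT E.
Proof.
rewrite (_ : E = fun z => Num.sqrt (\sum_(i < dx) ((z.1.1 : 'rV[R]_dx) 0 i - (z.2.1 : 'rV[R]_dx) 0 i) ^+ 2
   + \sum_(i < dx) ((z.1.2 : 'rV[R]_dx) 0 i - (z.2.2 : 'rV[R]_dx) 0 i) ^+ 2)); last first.
  apply/funext => z; rewrite /E /enorm big_split_ord /=; congr (Num.sqrt (_ + _)).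
    by apply: eq_bigr => j _; rewrite row_mxEl !mxE.
  by apply: eq_bigr => j _; rewrite row_mxEr !mxE.
apply: measurableT_comp; first exact: continuous_measurable_fun (@sqrt_continuous R).
apply: measurable_funD; apply: measurable_sum => j; apply: measurable_funX;
  apply: measurable_funB.
- exact: (coordY true true j).
- exact: (coordY false true j).
- exact: (coordY true false j).
- exact: (coordY false false j).
Qed.

Lemma comp_bound th th' (q q' : probability X R) g i : in_P2 q -> in_P2 q' ->
  is_coupling q q' g ->
  ((`|Rintegral q setT (F th i) - Rintegral q' setT (F th' i)|)%:E <=
   (K * enorm (th - th'))%:E + K%:E * \int[g]_z (E z)%:E)%E.
Proof.
move=> hq hq' hc.
have mG : measurable_fun setT (fun z => K * enorm (th - th') + K * E z).
  apply: measurable_funD; first exact: measurable_cst.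
  apply: measurable_funM; first exact: measurable_cst.
  exact: E_meas.
have hG : forall z : (X * X)%type, `|F th i z.1 - F th' i z.2| <= K * enorm (th - th') + K * E z.
  move=> z; apply: le_trans (lipf _ _ _ _ _) _.
  rewrite mulrDr lerD2l; apply: ler_wpM2l; [exact: ltW | exact: enorm_row_mx_gel].
have := (core q q' g (fun A mA => (hc A mA).1) (fun A mA => (hc A mA).2)
  (F_meas th i) (F_meas th' i) (F_int th i q hq) (F_int th' i q' hq') mG hG).
move/le_trans; apply.
rewrite le_eqVlt; apply/orP; left; apply/eqP.
apply: int_aff.
- by rewrite mulr_ge0 ?enorm_ge0 // ltW.
- exact: ltW.
- exact: E_meas.
- exact: E_ge0.
Qed.

End Main.


Theorem propositionG1 (R : realType) (dt dx : nat)
    (l : 'rV[R]_dt -> 'rV[R]_dx -> R)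
    (l_diff : forall (th : 'rV[R]_dt) (x : 'rV[R]_dx),
        differentiable (fun p : 'rV[R]_dt * 'rV[R]_dx => l p.1 p.2) (th, x))
    (K : R) (K_pos : 0 < K)
    (l_lip : forall (th th' : 'rV[R]_dt) (x x' : 'rV[R]_dx),
        enorm (grad_full l th x - grad_full l th' x')
          <= K * enorm (row_mx (th - th') (x - x'))) :
  exists KF : R, 0 < KF /\
    forall (th th' : 'rV[R]_dt) (q q' : probability (Rn R dx * Rn R dx)%type R),
      in_P2 q -> in_P2 q' ->
      ((enorm (grad_theta_F l th q - grad_theta_F l th' q'))%:E
         <= KF%:E * ((enorm (th - th'))%:E + W1 q q'))%E.
Proof.
have KF0 : 0 < dt.+1%:R * K by rewrite mulr_gt0.
exists (dt.+1%:R * K); split => // th th' q q' hq hq'.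
set v := grad_theta_F l th q - grad_theta_F l th' q'.
set a := enorm (th - th').
set KF := dt.+1%:R * K.
have a0 : 0 <= a by exact: enorm_ge0.
have key : forall g, is_coupling q q' g -> forall w,
    (\int[g]_z (E R dx z)%:E = w%:E)%E -> enorm v <= KF * (a + w).
  move=> g hc w hw.
  have w0 : 0 <= w.
    rewrite -lee_fin -hw; apply: integral_ge0 => z _; rewrite lee_fin; exact: enorm_ge0.
  have hi : forall i, `|v 0 i| <= K * a + K * w.
    move=> i.
    have := @comp_bound R dt dx l K K_pos l_lip th th' q q' g i hq hq' hc.
    rewrite hw -EFinM -EFinD lee_fin.
    rewrite /v /grad_theta_F !mxE opprK addrC -opprB normrN.
    by [].
  apply: le_trans; first exact: enorm_le_sum.
  apply: le_trans; first by apply: ler_sum => i _; exact: hi i.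
  rewrite sumr_const card_ord -mulr_natl /KF -mulrA -mulrDr.
  apply: ler_wpM2r; first by rewrite mulr_ge0 ?addr_ge0 // ltW.
  by rewrite ler_nat.
have hlb : forall y, [set (\int[g]_z
      (enorm (row_mx ((z.1.1 : 'rV[R]_dx) - z.2.1) ((z.1.2 : 'rV[R]_dx) - z.2.2)))%:E)%E
    | g in is_coupling q q'] y -> ((enorm v / KF - a)%:E <= y)%E.
  move=> _ [g hc <-].
  change ((enorm v / KF - a)%:E <= \int[g]_z (E R dx z)%:E)%E.
  have ge0 : (0 <= \int[g]_z (E R dx z)%:E)%E.
    apply: integral_ge0 => z _; rewrite lee_fin; exact: enorm_ge0.
  move: ge0 (key g hc).
  case: (\int[g]_z (E R dx z)%:E)%E => [w| |] //= _ hk; last exact: leey.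
  rewrite lee_fin lerBlDr ler_pdivrMr // mulrC addrC.
  exact: hk.
have hW : ((enorm v / KF - a)%:E <= W1 q q')%E by rewrite /W1; apply: le_ereal_inf_tmp => y; exact: hlb.
move: hW; case: (W1 q q') => [w| |] //= hW.
- rewrite -EFinD -EFinM lee_fin.
  move: hW; rewrite lee_fin lerBlDr ler_pdivrMr // mulrC addrC //.
- by rewrite addey // muleC gt0_mulye ?lte_fin // leey.
Qed.
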